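(* Let $n$ be a positive integer, $\sigma\in(0,1]$ with $\sigma n$ an integer, and let $S\subseteq[n]$ with $|S|=\sigma n$. Let $\alpha>0$ be such that $k=\alpha/\sigma$ is a positive integer. Construct $(X_1,Z_1,\dots,Z_k)$ as follows: draw $Y_1,\dots,Y_k$ independently and uniformly from $[n]$; for each $i$ with $Y_i\notin S$ set $Z_i=Y_i$; for each $i$ with $Y_i\in S$ draw $\tilde W_i$ uniformly from $S$ (independently of everything else) and set $Z_i=\tilde W_i$; if there is at least one $i$ with $Y_i\in S$, let $X_1$ be chosen uniformly at random from the set of drawn values $\{\tilde W_i\}$, and otherwise draw $X_1$ uniformly from $S$ independently. Then: (a) $X_1$ is uniformly distributed on $S$; (b) each $Z_i$ is uniformly distributed on $[n]$; (c) $Z_1,\dots,Z_k$ are independent; (d) with probability $1-(1-\sigma)^{\alpha/\sigma}$, $X_1\in\{Z_1,\dots,Z_k\}$. *)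

(* Defs.v *)
From mathcomp Require Import all_boot all_order all_algebra.
Unset Printing Implicit Defensive.
Import Order.TTheory GRing.Theory Num.Theory.
Local Open Scope ring_scope.

(* A sample point records
   - y : the draws Y_1..Y_k (uniform on [n], independent),
   - w : auxiliary draws W~_1..W~_k (uniform on S, independent); W~_i is only
         used when Y_i \in S (drawing it for all i changes nothing),
   - x : the value X_1. *)
Definition outcome (n k : nat) :=
  ({ffun 'I_k -> 'I_n} * {ffun 'I_k -> 'I_n} * 'I_n)%type.

Section Constr.
Variables (R : realFieldType) (n k : nat) (S : {set 'I_n}).

Definition drawn (y w : {ffun 'I_k -> 'I_n}) : {set 'I_n} :=
  [set w i | i in [set i | y i \in S]].

(* conditional probability of X_1 = x given (Y, W~) *)
Definition xweight (y w : {ffun 'I_k -> 'I_n}) (x : 'I_n) : R :=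
  let D := drawn y w in
  if D != set0 then (x \in D)%:R / #|D|%:R else (x \in S)%:R / #|S|%:R.

Definition weight (o : outcome n k) : R :=
  let: (y, w, x) := o in
  (n%:R^-1) ^+ k * (\prod_i ((w i \in S)%:R / #|S|%:R)) * xweight y w x.

Definition Pr (E : pred (outcome n k)) : R := \sum_(o | E o) weight o.

Definition X1 {n k : nat} (o : outcome n k) : 'I_n := o.2.
Definition Z (o : outcome n k) (i : 'I_k) : 'I_n :=
  if o.1.1 i \in S then o.1.2 i else o.1.1 i.
End Constr.

(* Main.v *)
Require Import Defs.
From mathcomp Require Import all_boot all_order all_algebra.
From mathcomp Require Import perm.
Import Order.TTheory GRing.Theory Num.Theory.
Local Open Scope ring_scope.

Section H.
Variables (R : realFieldType) (n k : nat) (S : {set 'I_n}).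
Hypothesis HS : (0 < #|S|)%N.

Definition mw (y w : {ffun 'I_k -> 'I_n}) : R :=
  (n%:R^-1) ^+ k * (\prod_i ((w i \in S)%:R / #|S|%:R)).

Lemma weightE y w x : weight R n k S (y,w,x) = mw y w * xweight R n k S y w x.
Proof. by []. Qed.

Lemma sum_mem (T : finType) (A : {set T}) : \sum_x ((x \in A)%:R : R) = #|A|%:R.
Proof.
rewrite -sum1_card natr_sum [RHS]big_mkcond /=; apply eq_bigr => x _; by case: (x \in A).
Qed.

Lemma Hn : (0 < n)%N.
Proof. by apply: leq_trans HS _; rewrite -[X in (_ <= X)%N]card_ord max_card. Qed.

Lemma sumS : \sum_b ((b \in S)%:R / #|S|%:R : R) = 1.
Proof. by rewrite -mulr_suml sum_mem mulfV // pnatr_eq0 -lt0n. Qed.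

Lemma mwE y w : mw y w = \prod_i (n%:R^-1 * ((w i \in S)%:R / #|S|%:R)).
Proof. by rewrite big_split /= prodr_const card_ord. Qed.

Lemma prod_sum2 (f : 'I_k -> 'I_n -> 'I_n -> R) :
  \sum_(y : {ffun 'I_k -> 'I_n}) \sum_(w : {ffun 'I_k -> 'I_n}) \prod_i f i (y i) (w i)
  = \prod_i \sum_a \sum_b f i a b.
Proof.
symmetry; rewrite bigA_distr_bigA /=; apply eq_bigr => y _.
by rewrite bigA_distr_bigA.
Qed.

Lemma sum1 : \sum_(a : 'I_n) \sum_(b : 'I_n) (n%:R^-1 * ((b \in S)%:R / #|S|%:R)) = 1 :> R.
Proof.
rewrite (eq_bigr (fun _ => n%:R^-1)) => [|a _]; last by rewrite -mulr_sumr sumS mulr1.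
by rewrite sumr_const card_ord -(mulr_natl (n%:R^-1)) mulfV // pnatr_eq0 -lt0n Hn.
Qed.

Lemma total : \sum_y \sum_w mw y w = 1.
Proof.
under eq_bigr do under eq_bigr do rewrite mwE.
by rewrite (prod_sum2 (fun i a b => n%:R^-1 * ((b \in S)%:R / #|S|%:R))) big1 // => i _; rewrite sum1.
Qed.

Lemma sumx y w : \sum_x xweight R n k S y w x = 1.
Proof.
rewrite /xweight /=; case: (boolP (drawn n k S y w != set0)) => HD.
  by rewrite -mulr_suml sum_mem mulfV // pnatr_eq0 -lt0n card_gt0.
by rewrite -mulr_suml sum_mem mulfV // pnatr_eq0 -lt0n.
Qed.

Lemma Pr_sum (E : pred (outcome n k)) : Pr R n k S E =
  \sum_y \sum_w \sum_x (E (y,w,x))%:R * weight R n k S (y,w,x).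
Proof.
rewrite /Pr big_mkcond /= pair_big pair_big /=.
apply eq_bigr => [[[y w] x]] _ /=; by case: (E _); rewrite ?mul1r ?mul0r.
Qed.

Lemma Pr_yw (E : pred (outcome n k)) (P : {ffun 'I_k -> 'I_n} -> {ffun 'I_k -> 'I_n} -> bool) :
  (forall y w x, E (y,w,x) = P y w) ->
  Pr R n k S E = \sum_y \sum_w (P y w)%:R * mw y w.
Proof.
move=> HE; rewrite Pr_sum; apply eq_bigr => y _; apply eq_bigr => w _.
under eq_bigr => x _ do rewrite HE weightE mulrA.
by rewrite -mulr_sumr sumx mulr1.
Qed.

Lemma forall_nat (b : 'I_k -> bool) : ([forall i, b i])%:R = \prod_i ((b i)%:R : R).
Proof.
case: (boolP [forall i, b i]) => [/forallP H | /forallPn [j Hj]].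
  by rewrite big1 // => i _; rewrite H.
by rewrite (bigD1 j) //= (negbTE Hj) mul0r.
Qed.

Lemma Pr_prod (E : pred (outcome n k)) (Q : 'I_k -> 'I_n -> 'I_n -> bool) :
  (forall y w x, E (y,w,x) = [forall i, Q i (y i) (w i)]) ->
  Pr R n k S E = \prod_i \sum_a \sum_b (Q i a b)%:R * (n%:R^-1 * ((b \in S)%:R / #|S|%:R)).
Proof.
move=> HE; rewrite (@Pr_yw E (fun y w => [forall i, Q i (y i) (w i)])) // -prod_sum2.
apply eq_bigr => y _; apply eq_bigr => w _.
by rewrite forall_nat mwE -big_split.
Qed.


Lemma pt (z : 'I_n) :
  \sum_(a : 'I_n) \sum_(b : 'I_n)
    (((if a \in S then b else a) == z)%:R * (n%:R^-1 * ((b \in S)%:R / #|S|%:R)) : R)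
  = n%:R^-1.
Proof.
case Hz: (z \in S).
  rewrite (eq_bigr (fun a => (a \in S)%:R * (n%:R^-1 / #|S|%:R))) => [|a _].
    by rewrite -mulr_suml sum_mem mulrCA mulfV ?mulr1 // pnatr_eq0 -lt0n.
  case Ha: (a \in S).
    rewrite (bigD1 z) //= eqxx Hz big1 => [|b Hb]; last by rewrite (negbTE Hb) mul0r.
    by rewrite addr0 !mul1r.
  rewrite big1 ?mul0r // => b _.
  have /negbTE -> : a != z by apply/eqP => Haz; rewrite Haz Hz in Ha.
  by rewrite mul0r.
rewrite (bigD1 z) //= [X in _ + X]big1 => [|a Ha].
  rewrite Hz eqxx addr0.
  under eq_bigr do rewrite mul1r.
  by rewrite -mulr_sumr sumS mulr1.
case: (a \in S).
  apply: big1 => b _; case: eqP => [->|_]; by rewrite ?Hz /= !mul0r ?mulr0.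
by apply: big1 => b _; rewrite (negbTE Ha) mul0r.
Qed.

Lemma partb (i : 'I_k) (z : 'I_n) : Pr R n k S [pred o | Z n k S o i == z] = n%:R^-1.
Proof.
rewrite (@Pr_prod _ (fun j a b => if j == i then (if a \in S then b else a) == z else true)).
  rewrite (bigD1 i) //= eqxx pt big1 ?mulr1 // => j /negbTE ->.
  under eq_bigr do under eq_bigr do rewrite mul1r.
  exact: sum1.
move=> y w x; rewrite /Z /=; apply/idP/forallP => [H j | H].
  by case: eqP => [-> //|//].
by have := H i; rewrite eqxx.
Qed.

Lemma partc (z : {ffun 'I_k -> 'I_n}) :
  Pr R n k S [pred o | [forall i, Z n k S o i == z i]]
     = \prod_(i < k) Pr R n k S [pred o | Z n k S o i == z i].
Proof.
rewrite (@Pr_prod _ (fun j a b => (if a \in S then b else a) == z j)) //.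
by apply eq_bigr => i _; rewrite pt partb.
Qed.


Definition A (x : 'I_n) : R := \sum_y \sum_w weight R n k S (y, w, x).

Lemma PrX1 x : Pr R n k S [pred o | X1 o == x] = A x.
Proof.
rewrite Pr_sum /A; apply eq_bigr => y _; apply eq_bigr => w _.
rewrite (bigD1 x) //= eqxx mul1r [X in _ + X]big1 ?addr0 // => x' /negbTE Hx'.
by rewrite /X1 /= Hx' mul0r.
Qed.

Lemma A0 x : x \notin S -> A x = 0.
Proof.
move=> Hx; rewrite /A; apply: big1 => y _; apply: big1 => w _.
case: (boolP [forall i, w i \in S]) => [/forallP Hall | /forallPn [i Hi]].
  rewrite /weight /xweight /=.
  have /negbTE -> : x \notin drawn n k S y w.
    by apply/imsetP => [[j _ Hxj]]; move: Hx; rewrite Hxj Hall.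
  rewrite (negbTE Hx); case: ifP => _; by rewrite mul0r mulr0.
by rewrite /weight (bigD1 i) //= (negbTE Hi) mul0r mul0r mulr0 mul0r.
Qed.

Lemma Asym x x' : x \in S -> x' \in S -> A x = A x'.
Proof.
move=> Hx Hx'.
pose pi := tperm x x'.
pose h (w : {ffun 'I_k -> 'I_n}) := [ffun i => pi (w i)].
have hK : involutive h by move=> w; apply/ffunP => i; rewrite !ffunE tpermK.
have piS a : (pi a \in S) = (a \in S).
  by rewrite /pi; case: tpermP => [->|->|//]; rewrite Hx Hx'.
rewrite /A; apply eq_bigr => y _.
rewrite [RHS](reindex_inj (inv_inj hK)); apply eq_bigr => w _.
have HD : drawn n k S y (h w) = [set pi v | v in drawn n k S y w].
  by rewrite /drawn -imset_comp; apply: eq_imset => i /=; rewrite ffunE.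
rewrite /weight; congr (_ * _ * _).
  by apply eq_bigr => i _; rewrite ffunE piS.
have E1 : ([set pi v | v in drawn n k S y w] != set0) = (drawn n k S y w != set0).
  by rewrite imset_eq0.
have E2 : #|[set pi v | v in drawn n k S y w]| = #|drawn n k S y w|.
  by apply: card_imset; exact: perm_inj.
have E3 : (x' \in [set pi v | v in drawn n k S y w]) = (x \in drawn n k S y w).
  by rewrite -{1}(tpermL x x') mem_imset //; exact: perm_inj.
by rewrite /xweight /= HD E1 E2 E3 Hx Hx'.
Qed.


Lemma parta x : Pr R n k S [pred o | X1 o == x] = if x \in S then (#|S|%:R)^-1 else 0.
Proof.
rewrite PrX1; case: ifP => Hx; last by rewrite A0 // Hx.
have Hsum : \sum_x' A x' = 1.
  rewrite -total /A exchange_big /=; apply eq_bigr => y _.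
  rewrite exchange_big /=; apply eq_bigr => w _.
  by rewrite -mulr_sumr sumx mulr1.
rewrite (eq_bigr (fun x' => (x' \in S)%:R * A x)) in Hsum; last first.
  move=> x' _; case: (boolP (x' \in S)) => H.
    by rewrite mul1r (Asym x x' Hx H).
  by rewrite A0 // mul0r.
rewrite -mulr_suml sum_mem in Hsum.
have HS0 : (#|S|%:R : R) != 0 by rewrite pnatr_eq0 -lt0n.
by apply: (mulfI HS0); rewrite Hsum mulfV.
Qed.

Lemma PrC (E : pred (outcome n k)) :
  Pr R n k S E = Pr R n k S predT - Pr R n k S [pred o | ~~ E o].
Proof.
rewrite /Pr [X in _ = X - _](bigID E) /= addrK.
by apply eq_bigl.
Qed.

Lemma PrT : Pr R n k S predT = 1.
Proof.
rewrite (@Pr_prod _ (fun _ _ _ => true)); last by move=> *; apply/esym/forallP.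
by apply: big1 => i _; under eq_bigr do under eq_bigr do rewrite mul1r; exact: sum1.
Qed.

Lemma PrNone : Pr R n k S [pred o : outcome n k | ~~ [exists i, o.1.1 i \in S]]
   = (1 - #|S|%:R / n%:R) ^+ k.
Proof.
rewrite (@Pr_prod _ (fun _ a _ => a \notin S)); last first.
  by move=> y w x; rewrite /= negb_exists.
rewrite -[in RHS](card_ord k) -prodr_const; apply eq_bigr => i _.
under eq_bigr do rewrite -mulr_sumr -mulr_sumr sumS mulr1.
rewrite -mulr_suml.
have -> : \sum_(a : 'I_n) ((a \notin S)%:R : R) = n%:R - #|S|%:R.
  rewrite (eq_bigr (fun a => (a \in ~: S)%:R)) => [|a _]; last by rewrite in_setC.
  have Hc : (n%:R : R) = #|S|%:R + #|~: S|%:R by rewrite -natrD cardsC card_ord.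
  by rewrite sum_mem Hc addrC addKr.
by rewrite mulrBl mulfV // pnatr_eq0 -lt0n Hn.
Qed.

Lemma partd : Pr R n k S [pred o | [exists i, X1 o == Z n k S o i]]
   = 1 - (1 - #|S|%:R / n%:R) ^+ k.
Proof.
pose E' := [pred o : outcome n k | [exists i, o.1.1 i \in S]].
rewrite (_ : Pr R n k S _ = Pr R n k S E').
  by rewrite (PrC E') PrT -PrNone.
rewrite /Pr /E' big_mkcond [RHS]big_mkcond; apply eq_bigr => [[[y w] x]] _ /=.
rewrite -/(mw y w) -!weightE.
have [->|Hw] := eqVneq (weight R n k S (y, w, x)) 0; first by rewrite !if_same.
move: Hw; rewrite weightE mulf_eq0 negb_or => /andP [_ Hxw].
case: (boolP [exists i, y i \in S]) => [/existsP [i Hi] | Hno].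
  have HD : drawn n k S y w != set0.
    by apply/set0Pn; exists (w i); apply: imset_f; rewrite inE.
  have /imsetP [j] : x \in drawn n k S y w.
    by move: Hxw; rewrite /xweight /= HD; case: (x \in _) => //; rewrite mul0r eqxx.
  rewrite inE => Hj Hxj.
  have -> // : [exists i0, x == Z n k S (y, w, x) i0].
  by apply/existsP; exists j; rewrite /X1 /Z /= Hj Hxj.
have HD : drawn n k S y w = set0.
  apply/eqP; rewrite -subset0; apply/subsetP => v /imsetP [j]; rewrite inE => Hj _.
  by case/negP: Hno; apply/existsP; exists j.
have HxS : x \in S.
  by move: Hxw; rewrite /xweight /= HD eqxx /=; case: (x \in S) => //; rewrite mul0r eqxx.
have -> // : [exists i0, x == Z n k S (y, w, x) i0] = false.
apply/existsP => [[j]]; rewrite /X1 /Z /=.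
have Hj : y j \notin S by move: Hno; rewrite negb_exists => /forallP.
by rewrite (negbTE Hj) => /eqP Hxy; move: HxS; rewrite Hxy (negbTE Hj).
Qed.

End H.

Theorem mainTheorem2 (R : realFieldType) (n k : nat) (sigma alpha : R)
  (S : {set 'I_n}) :
  (0 < n)%N -> 0 < sigma -> sigma <= 1 ->
  (#|S|)%:R = sigma * n%:R ->
  0 < alpha -> (0 < k)%N -> alpha / sigma = k%:R ->
  (* (a) X_1 uniform on S *)
  (forall x : 'I_n,
     Pr R n k S [pred o | X1 o == x] = if x \in S then (#|S|%:R)^-1 else 0) /\
  (* (b) each Z_i uniform on [n] *)
  (forall (i : 'I_k) (z : 'I_n), Pr R n k S [pred o | Z n k S o i == z] = (n%:R)^-1) /\
  (* (c) Z_1..Z_k mutually independent *)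
  (forall z : {ffun 'I_k -> 'I_n},
     Pr R n k S [pred o | [forall i, Z n k S o i == z i]]
     = \prod_(i < k) Pr R n k S [pred o | Z n k S o i == z i]) /\
  (* (d) *)
  Pr R n k S [pred o | [exists i, X1 o == Z n k S o i]] = 1 - (1 - sigma) ^+ k.
Proof.
move=> Hn0 Hs0 Hs1 HSn Ha Hk Hak.
have HS : (0 < #|S|)%N.
  have : (0 : R) < #|S|%:R by rewrite HSn mulr_gt0 // ltr0n.
  by rewrite ltr0n.
split; first exact: (@parta R n k S HS).
split; first exact: (@partb R n k S HS).
split; first exact: (@partc R n k S HS).
rewrite (@partd R n k S HS) HSn mulfK // pnatr_eq0 -lt0n //.
Qed.
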